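(* Let $n\ge 1$, $\sigma>0$, $\lambda>0$, covariates $X=(X_1,\dots,X_n)\in[0,1]^n$ and responses $\mathbf y\in\mathbb R^n$ be given. Let $K:[0,1]^2\to\mathbb R$ be a continuous, symmetric, positive definite kernel with $K\in C^2([0,1]\times[0,1])$, and suppose $\widehat\sigma^2_{f'}(x)>0$ for every $x\in[0,1]$. Then there is a constant $C$ not depending on $t$ such that for all $t\in[0,1]$, $$\ell(t)=C\,\frac{1}{\sqrt{\widehat\sigma^2_{f'}(t)/K_{11}(t,t)}}\exp\Big\{-\frac{\widehat\mu_{f'}(t)^2}{2\widehat\sigma^2_{f'}(t)}\Big\}.$$ Consequently, for a prior density $\pi(t)$ on $[0,1]$, the posterior density of $t$ satisfies $$\pi_n(t\mid X,\mathbf y)\propto \frac{1}{\sqrt{\widehat\sigma^2_{f'}(t)/K_{11}(t,t)}}\exp\Big(-\frac{\widehat\mu_{f'}(t)^2}{2\widehat\sigma^2_{f'}(t)}\Big)\pi(t).$$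
   Context: Notation: $K_{jl}(x,x')=\partial^{j+l}K(x,x')/\partial x^j\partial x'^l$; $K(X,X)=(K(X_i,X_j))_{i,j=1}^n$; $K_{10}(x,X)=(K_{10}(x,X_1),\dots,K_{10}(x,X_n))$ (row vector) and $K_{01}(X,x)=K_{10}(x,X)^T$; $I_n$ is the $n\times n$ identity. Define $\widehat\mu_{f'}(x)=K_{10}(x,X)[K(X,X)+n\lambda I_n]^{-1}\mathbf y$ and $\widehat\sigma^2_{f'}(x)=\sigma^2(n\lambda)^{-1}\{K_{11}(x,x)-K_{10}(x,X)[K(X,X)+n\lambda I_n]^{-1}K_{01}(X,x)\}$ (posterior mean and variance of $f'$ under the unconstrained prior $f\sim \mathrm{GP}(0,\sigma^2(n\lambda)^{-1}K)$ in the model $y_i=f(X_i)+\epsilon_i$, $\epsilon_i\sim N(0,\sigma^2)$ i.i.d.). Constrained prior: given $t\in[0,1]$, $f\sim\mathrm{GP}(0,k_t)$ with $k_t(x,x')=\sigma^2(n\lambda)^{-1}\{K(x,x')-K_{01}(x,t)K_{11}(t,t)^{-1}K_{10}(t,x')\}$ (the GP conditioned on $f'(t)=0$), and $t\sim\pi$. Integrating out $f$ gives $\mathbf y\mid X,t\sim N(0,\Sigma_t)$ with $\Sigma_t=\sigma^2(n\lambda)^{-1}\{K(X,X)-K_{01}(X,t)K_{11}(t,t)^{-1}K_{10}(t,X)\}+\sigma^2 I_n$; the marginal likelihood $\ell(t)$ is the $N(0,\Sigma_t)$ density evaluated at $\mathbf y$, and $\pi_n(t\mid X,\mathbf y)\propto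 \ell(t)\pi(t)$. *)

(* Defs.v *)
From HB Require Import structures.
From mathcomp Require Import all_boot all_order all_algebra.
From mathcomp Require Import all_classical all_reals all_analysis.
Set Implicit Arguments. Unset Strict Implicit. Unset Printing Implicit Defensive.
Import Order.TTheory GRing.Theory Num.Theory.
Import numFieldNormedType.Exports.
Local Open Scope classical_set_scope.
Local Open Scope ring_scope.

Section GPDefs.
Variable R : realType.

Definition K10 (K : R -> R -> R) (x x' : R) : R := derive1 (fun u => K u x') x.
Definition K01 (K : R -> R -> R) (x x' : R) : R := derive1 (fun v => K x v) x'.
Definition K11 (K : R -> R -> R) (x x' : R) : R := derive1 (fun v => K10 K x v) x'.
Definition K20 (K : R -> R -> R) (x x' : R) : R := derive1 (fun u => K10 K u x') x.
Definition K02 (K : R -> R -> R) (x x' : R) : R := derive1 (fun v => K01 K x v) x'.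

Definition unit_sq : set (R * R) := `[0, 1] `*` `[0, 1].

Definition C2_on_square (K : R -> R -> R) : Prop :=
  (forall x x', x \in `[0, 1] -> x' \in `[0, 1] ->
     [/\ derivable (fun u => K u x') x 1, derivable (fun v => K x v) x' 1,
         derivable (fun u => K10 K u x') x 1 & derivable (fun v => K10 K x v) x' 1]
     /\ derivable (fun u => K01 K u x') x 1 /\ derivable (fun v => K01 K x v) x' 1)
  /\ {within unit_sq, continuous (fun p => K p.1 p.2)}
  /\ {within unit_sq, continuous (fun p => K10 K p.1 p.2)}
  /\ {within unit_sq, continuous (fun p => K01 K p.1 p.2)}
  /\ {within unit_sq, continuous (fun p => K20 K p.1 p.2)}
  /\ {within unit_sq, continuous (fun p => K11 K p.1 p.2)}
  /\ {within unit_sq, continuous (fun p => K02 K p.1 p.2)}.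

Definition kernel_symmetric (K : R -> R -> R) : Prop :=
  forall x x', x \in `[0, 1] -> x' \in `[0, 1] -> K x x' = K x' x.

(* positive definite kernel (Aronszajn/Mercer sense): every Gram matrix on
   points of [0,1] is positive semi-definite. *)
Definition kernel_posdef (K : R -> R -> R) : Prop :=
  forall (m : nat) (p : 'I_m -> R) (c : 'rV[R]_m),
    (forall i, p i \in `[0, 1]) ->
    0 <= (c *m (\matrix_(i, j) K (p i) (p j)) *m c^T) 0 0.

Variable n : nat.

Definition KXX (K : R -> R -> R) (X : 'I_n -> R) : 'M[R]_n :=
  \matrix_(i, j) K (X i) (X j).
Definition K10xX (K : R -> R -> R) (X : 'I_n -> R) (x : R) : 'rV[R]_n :=
  \row_j K10 K x (X j).
Definition K01Xx (K : R -> R -> R) (X : 'I_n -> R) (x : R) : 'cV[R]_n :=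
  (K10xX K X x)^T.

Definition Mreg (K : R -> R -> R) (X : 'I_n -> R) (lam : R) : 'M[R]_n :=
  KXX K X + (n%:R * lam)%:M.

Definition mu_hat (K : R -> R -> R) (X : 'I_n -> R) (y : 'cV[R]_n) (lam x : R) : R :=
  (K10xX K X x *m invmx (Mreg K X lam) *m y) 0 0.

Definition sigma2_hat (K : R -> R -> R) (X : 'I_n -> R) (sig lam x : R) : R :=
  sig ^+ 2 / (n%:R * lam) *
  (K11 K x x - (K10xX K X x *m invmx (Mreg K X lam) *m K01Xx K X x) 0 0).

Definition Sigma_t (K : R -> R -> R) (X : 'I_n -> R) (sig lam t : R) : 'M[R]_n :=
  (sig ^+ 2 / (n%:R * lam)) *:
    (KXX K X - (K11 K t t)^-1 *: (K01Xx K X t *m K10xX K X t))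
  + (sig ^+ 2) *: 1%:M.

Definition gauss_density (S : 'M[R]_n) (y : 'cV[R]_n) : R :=
  (Num.sqrt ((2 * pi) ^+ n * \det S))^-1 *
  expR (- ((y^T *m invmx S *m y) 0 0) / 2).

Definition marg_lik (K : R -> R -> R) (X : 'I_n -> R) (y : 'cV[R]_n) (sig lam t : R) : R :=
  gauss_density (Sigma_t K X sig lam t) y.

Definition post_density (K : R -> R -> R) (X : 'I_n -> R) (y : 'cV[R]_n)
  (sig lam : R) (prior : R -> R) (t : R) : R :=
  marg_lik K X y sig lam t * prior t /
  (\int[@lebesgue_measure R]_(s in `[0, 1]) (marg_lik K X y sig lam s * prior s)).

End GPDefs.

(* Main.v *)
Require Import Defs.
From HB Require Import structures.
From mathcomp Require Import all_boot all_order all_algebra.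
From mathcomp Require Import all_classical all_reals all_analysis.
From mathcomp Require Import ring lra.
Import Order.TTheory GRing.Theory Num.Theory.
Import numFieldNormedType.Exports.
Local Open Scope classical_set_scope.
Local Open Scope ring_scope.
Lemma det_rank1 (F : fieldType) (n : nat) (u : 'cV[F]_n) (v : 'rV[F]_n) :
  \det (1%:M - u *m v) = 1 - (v *m u) 0 0.
Proof.
have e1 : block_mx (1%:M - u *m v) u 0 1%:M *m block_mx 1%:M 0 v 1%:M
          = block_mx 1%:M u v (1%:M : 'M[F]_1).
  by rewrite mulmx_block ?mulmx1 ?mulmx0 ?mul0mx ?mul1mx ?subrK ?add0r ?addr0.
have e2 : block_mx 1%:M 0 v 1%:M *m block_mx 1%:M u 0 (1%:M - v *m u)
          = block_mx 1%:M u v (1%:M : 'M[F]_1).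
  by rewrite mulmx_block ?mulmx1 ?mulmx0 ?mul0mx ?mul1mx ?addr0 ?add0r (addrC (v *m u)) ?subrK.
have := congr1 determinant (etrans e1 (esym e2)).
rewrite !det_mulmx !det_ublock !det_lblock !det1 !mulr1 !mul1r.
by rewrite det_mx11 !mxE /=.
Qed.

Lemma Mquad (R : realType) (n : nat) (lam : R) (X : 'I_n -> R) (K : R -> R -> R)
  (u : 'rV[R]_n) : 0 < lam -> (0 < n)%N -> (forall i, X i \in `[0, 1]) ->
  kernel_posdef K ->
  0 <= (u *m Mreg K X lam *m u^T) 0 0 /\
  ((u *m Mreg K X lam *m u^T) 0 0 = 0 -> u = 0).
Proof.
move=> hl hn hX hpd.
have e : (u *m Mreg K X lam *m u^T) 0 0 =
   (u *m KXX K X *m u^T) 0 0 + (n%:R * lam) * \sum_j (u 0 j) ^+ 2.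
  rewrite /Mreg mulmxDr mulmxDl mul_mx_scalar -scalemxAl mxE [X in _ + X]mxE mxE.
  congr (_ + _ * _).
  by rewrite mxE; apply: eq_bigr => j _; rewrite mxE expr2.
have h1 : 0 <= (u *m KXX K X *m u^T) 0 0 by apply: hpd.
have h2 : 0 <= \sum_j (u 0 j) ^+ 2 by apply: sumr_ge0 => j _; apply: sqr_ge0.
have hnl : 0 < n%:R * lam by rewrite mulr_gt0 // ltr0n.
rewrite e; split; first by rewrite addr_ge0 // mulr_ge0 // ltW.
move=> h0.
have hs : \sum_j (u 0 j) ^+ 2 = 0.
  apply/eqP; rewrite eq_le h2 andbT.
  have : (n%:R * lam) * \sum_j (u 0 j) ^+ 2 <= 0 by lra.
  by rewrite pmulr_rle0.
apply/matrixP => i j; rewrite (ord1 i) mxE.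
have := @psumr_eq0P _ _ predT (fun j => u 0 j ^+ 2) (fun j _ => sqr_ge0 (u 0 j)) hs j isT.
by move/eqP; rewrite sqrf_eq0 => /eqP.
Qed.

Lemma part1 (R : realType) (n : nat) (sig lam : R)
  (X : 'I_n -> R) (y : 'cV[R]_n) (K : R -> R -> R) :
  (0 < n)%N -> 0 < sig -> 0 < lam ->
  (forall i, X i \in `[0, 1]) ->
  kernel_symmetric K -> kernel_posdef K ->
  (forall x, x \in `[0, 1] -> 0 < sigma2_hat K X sig lam x) ->
  (exists C : R, forall t, t \in `[0, 1] ->
     marg_lik K X y sig lam t =
     C * ((Num.sqrt (sigma2_hat K X sig lam t / K11 K t t))^-1 *
          expR (- (mu_hat K X y lam t ^+ 2) / (2 * sigma2_hat K X sig lam t)))).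
Proof.
move=> hn hs hl hX hsym hpd hpos.
set M := Mreg K X lam.
set N := invmx M.
set a := sig ^+ 2 / (n%:R * lam).
have hnl : 0 < n%:R * lam by rewrite mulr_gt0 // ltr0n.
have ha : 0 < a by rewrite divr_gt0 // exprn_gt0.
have hMu : M \in unitmx.
  rewrite -row_free_unit -kermx_eq0; apply/eqP/row_matrixP => i; rewrite row0.
  have hr : row i (kermx M) *m M = 0 by rewrite -row_mul mulmx_ker row0.
  have [_ h] := @Mquad _ _ lam X K (row i (kermx M)) hl hn hX hpd.
  by apply: h; rewrite hr mul0mx mxE.
have hMT : M^T = M.
  rewrite /M /Mreg raddfD /= tr_scalar_mx; congr (_ + _).
  apply/matrixP => i j; rewrite !mxE; exact: hsym.
have hNT : N^T = N by rewrite /N trmx_inv hMT.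
set p := (y^T *m N *m y) 0 0.
set D := (2 * pi) ^+ n * a ^+ n * \det M / a.
exists ((Num.sqrt D)^-1 * expR (- (a^-1 * p) / 2)) => t ht.
have hst := hpos t ht.
move: hst; rewrite /sigma2_hat /mu_hat /marg_lik /gauss_density -/M -/N -/a.
set k := K10xX K X t.
set kap := K11 K t t.
have -> : K01Xx K X t = k^T by [].
set q := (k *m N *m k^T) 0 0.
set mu := (k *m N *m y) 0 0.
move=> hst.
have hq : 0 <= q.
  have -> : q = ((k *m N) *m M *m (k *m N)^T) 0 0.
    by rewrite trmx_mul hNT -!mulmxA (mulmxA N M) mulVmx // mul1mx /q mulmxA.
  exact: (@Mquad _ _ lam X K (k *m N) hl hn hX hpd).1.
have hkq : 0 < kap - q by rewrite -(pmulr_rgt0 _ ha).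
have hkap : 0 < kap by lra.
have hS : Sigma_t K X sig lam t = a *: (M - kap^-1 *: (k^T *m k)).
  rewrite /Sigma_t /M /Mreg -/k -/kap -/a.
  apply/matrixP => i j; rewrite !mxE.
  have hn0 : n%:R != 0 :> R by rewrite pnatr_eq0 -lt0n.
  have hl0 : lam != 0 by rewrite gt_eqF.
  have hk0 : kap != 0 by rewrite gt_eqF.
  by case: (i == j); rewrite /= ?mulr1n ?mulr0n /a; field; rewrite hn0 hl0 hk0.
set Sinv := a^-1 *: (N + (kap - q)^-1 *: (N *m k^T *m k *m N)).
have hSS : Sigma_t K X sig lam t *m Sinv = 1%:M.
  rewrite hS /Sinv -scalemxAl -scalemxAr scalerA mulfV ?gt_eqF // scale1r.
  have h1 : M *m (N *m k^T *m k *m N) = k^T *m k *m N.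
    by rewrite !mulmxA mulmxV // mul1mx.
  have h2 : (k^T *m k) *m (N *m k^T *m k *m N) = q *: (k^T *m k *m N).
    have -> : (k^T *m k) *m (N *m k^T *m k *m N) = k^T *m (k *m N *m k^T) *m (k *m N).
      by rewrite !mulmxA.
    by rewrite [k *m N *m k^T]mx11_scalar mul_mx_scalar -!scalemxAl mulmxA.
  rewrite mulmxBl !mulmxDr -!scalemxAr -!scalemxAl h1 h2 mulmxV //.
  move: (k^T *m k *m N) => P.
  have hcoef : (kap - q)^-1 - (kap^-1 + kap^-1 * ((kap - q)^-1 * q)) = 0.
    by field; rewrite !gt_eqF.
  apply/matrixP => i j; rewrite !mxE.
  rewrite -[RHS]addr0 -(mulr0 (P i j)) -hcoef; ring.
have [hSu _] := mulmx1_unit hSS.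
have hinv : invmx (Sigma_t K X sig lam t) = Sinv.
  by rewrite -[RHS]mul1mx -(mulVmx hSu) -mulmxA hSS mulmx1.
have hquad : (y^T *m Sinv *m y) 0 0 = a^-1 * (p + (kap - q)^-1 * (mu * mu)).
  rewrite /Sinv -scalemxAr -scalemxAl mxE mulmxDr mulmxDl mxE; congr (_ * (_ + _)).
  rewrite -scalemxAr -scalemxAl mxE; congr (_ * _).
  have -> : y^T *m (N *m k^T *m k *m N) *m y = (y^T *m N *m k^T) *m (k *m N *m y).
    by rewrite !mulmxA.
  have -> : y^T *m N *m k^T = (k *m N *m y)^T by rewrite !trmx_mul hNT mulmxA.
  by rewrite mxE big_ord1 mxE.
have hdet : (2 * pi) ^+ n * \det (Sigma_t K X sig lam t) = (a * (kap - q) / kap) * D.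
  rewrite hS.
  have -> : M - kap^-1 *: (k^T *m k) = M *m (1%:M - (kap^-1 *: (N *m k^T)) *m k).
    by rewrite mulmxBr mulmx1 -scalemxAl -scalemxAr !mulmxA mulmxV // mul1mx.
  rewrite detZ det_mulmx det_rank1 -scalemxAr mxE mulmxA -/q /D.
  field; rewrite !gt_eqF //.
rewrite hinv hdet sqrtrM; last by rewrite ltW // divr_gt0.
have -> : - (y^T *m Sinv *m y) 0 0 / 2 =
    - (a^-1 * p) / 2 + - (mu ^+ 2) / (2 * (a * (kap - q))).
  by rewrite hquad; field; rewrite !gt_eqF.
rewrite expRD invfM; ring.
Qed.
Theorem proposition1 (R : realType) (n : nat) (sig lam : R)
  (X : 'I_n -> R) (y : 'cV[R]_n) (K : R -> R -> R) (prior : R -> R) :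
  (0 < n)%N -> 0 < sig -> 0 < lam ->
  (forall i, X i \in `[0, 1]) ->
  {within @unit_sq R, continuous (fun p => K p.1 p.2)} ->
  kernel_symmetric K -> kernel_posdef K -> C2_on_square K ->
  (forall x, x \in `[0, 1] -> 0 < sigma2_hat K X sig lam x) ->
  (* prior density on [0,1] *)
  measurable_fun (`[0, 1] : set R) prior ->
  (forall t, t \in `[0, 1] -> 0 <= prior t) ->
  \int[@lebesgue_measure R]_(t in `[0, 1]) prior t = 1 ->
  (exists C : R, forall t, t \in `[0, 1] ->
     marg_lik K X y sig lam t =
     C * ((Num.sqrt (sigma2_hat K X sig lam t / K11 K t t))^-1 *
          expR (- (mu_hat K X y lam t ^+ 2) / (2 * sigma2_hat K X sig lam t))))
  /\
  (exists C' : R, forall t, t \in `[0, 1] ->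
     post_density K X y sig lam prior t =
     C' * ((Num.sqrt (sigma2_hat K X sig lam t / K11 K t t))^-1 *
           expR (- (mu_hat K X y lam t ^+ 2) / (2 * sigma2_hat K X sig lam t))) * prior t).
Proof.
move=> hn hs hl hX _ hsym hpd _ hpos _ _ _.
have [C HC] := @part1 _ _ sig lam X y K hn hs hl hX hsym hpd hpos.
split; first by exists C.
exists (C / \int[@lebesgue_measure R]_(s in `[0, 1]) (marg_lik K X y sig lam s * prior s)).
move=> t ht; rewrite /post_density (HC t ht); ring.
Qed.
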